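(* Let $(R,\mathfrak{m},k)$ be a commutative Noetherian local ring and let $n$ be a positive integer. Let $x_1,\dots,x_n,y\in\mathfrak{m}$ be elements such that the ideal $(x_1,x_2,\dots,x_n,y)$ has minimal number of generators $n+1$. Let $p,q\in R$ satisfy $(x_1+py,x_2,\dots,x_n)=(x_1+qy,x_2,\dots,x_n)$ as ideals of $R$. Then $\overline p=\overline q$ in $k=R/\mathfrak{m}$. *)

(* Defs.v *)
From mathcomp Require Import all_boot all_algebra.
Set Implicit Arguments. Unset Strict Implicit. Unset Printing Implicit Defensive.
Import GRing.Theory.
Local Open Scope ring_scope.

Section CommAlg.
Variable R : comNzRingType.

Definition is_ideal (I : R -> Prop) : Prop :=
  [/\ I 0, (forall a b, I a -> I b -> I (a + b)) &
      (forall r a, I a -> I (r * a))].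

Definition same_ideal (I J : R -> Prop) : Prop := forall r, I r <-> J r.

Definition ideal_gen (s : seq R) : R -> Prop :=
  fun r => exists c : seq R, size c = size s /\
             r = \sum_(i < size s) c`_i * s`_i.

Definition noetherian : Prop :=
  forall I, is_ideal I -> exists s : seq R, same_ideal I (ideal_gen s).

Definition proper_ideal (I : R -> Prop) : Prop := is_ideal I /\ ~ I 1.

Definition maximal_ideal (m : R -> Prop) : Prop :=
  proper_ideal m /\
  forall J, proper_ideal J -> (forall r, m r -> J r) -> same_ideal J m.

Definition local_ring_with (m : R -> Prop) : Prop :=
  maximal_ideal m /\ forall m', maximal_ideal m' -> same_ideal m' m.

Definition min_num_gens (I : R -> Prop) (n : nat) : Prop :=
  (exists s : seq R, size s = n /\ same_ideal I (ideal_gen s)) /\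
  (forall s : seq R, same_ideal I (ideal_gen s) -> (n <= size s)%N).

End CommAlg.

(* Main.v *)
Require Import Defs.
From mathcomp Require Import all_boot all_algebra.
From mathcomp Require Import ring.
From Stdlib Require Import ClassicalEpsilon Classical.
Set Implicit Arguments. Unset Strict Implicit.
Import GRing.Theory.
Local Open Scope ring_scope.

Section Aux.
Variable R : comNzRingType.

Lemma ig_nil (r : R) : ideal_gen [::] r <-> r = 0.
Proof.
split; first by case=> c [_ ->]; rewrite big_ord0.
by move=> ->; exists [::]; rewrite big_ord0.
Qed.

Lemma ig_cons (z : R) s r : ideal_gen (z :: s) r <->
  exists a w, ideal_gen s w /\ r = a * z + w.
Proof.
split.
  case=> [[|c0 c] [//= [Hs] ->]].
  exists c0, (\sum_(i < size s) c`_i * s`_i); split; first by exists c.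
  by rewrite big_ord_recl.
case=> a [w [[c [Hs ->]] ->]].
exists (a :: c); split; first by rewrite /= Hs.
by rewrite /= big_ord_recl.
Qed.

Lemma ig_ideal (s : seq R) : is_ideal (ideal_gen s).
Proof.
elim: s => [|z s [H0 HD HM]].
  split; first by apply/ig_nil.
  - by move=> a b /ig_nil -> /ig_nil ->; apply/ig_nil; rewrite addr0.
  - by move=> r a /ig_nil ->; apply/ig_nil; rewrite mulr0.
split.
- by apply/ig_cons; exists 0, 0; split => //; rewrite mul0r addr0.
- move=> a b /ig_cons [a1 [w1 [H1 ->]]] /ig_cons [a2 [w2 [H2 ->]]].
  apply/ig_cons; exists (a1 + a2), (w1 + w2); split; first by apply: HD.
  ring.
- move=> r a /ig_cons [a1 [w1 [H1 ->]]].
  apply/ig_cons; exists (r * a1), (r * w1); split; first by apply: HM.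
  ring.
Qed.

Lemma ig_mem (s : seq R) z : z \in s -> ideal_gen s z.
Proof.
elim: s => [//|z' s IH]; rewrite in_cons => /orP [/eqP ->|Hz].
  apply/ig_cons; exists 1, 0; split; last by rewrite mul1r addr0.
  by case: (ig_ideal s).
apply/ig_cons; exists 0, z; split; [by apply: IH | by rewrite mul0r add0r].
Qed.

Lemma ig_min (s : seq R) (I : R -> Prop) : is_ideal I ->
  (forall z, z \in s -> I z) -> forall r, ideal_gen s r -> I r.
Proof.
move=> [H0 HD HM]; elim: s => [|z s IH] Hs r.
  by move/ig_nil ->.
case/ig_cons => a [w [Hw ->]]; apply: HD.
  by apply: HM; apply: Hs; rewrite mem_head.
by apply: IH => // z' Hz'; apply: Hs; rewrite in_cons Hz' orbT.
Qed.

Lemma id_opp (I : R -> Prop) a : is_ideal I -> I a -> I (- a).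
Proof. by move=> [_ _ HM] Ha; rewrite -mulN1r; apply: HM. Qed.

Lemma id_sub (I : R -> Prop) a b : is_ideal I -> I a -> I b -> I (a - b).
Proof. move=> HI Ha Hb; case: (HI) => _ HD _; apply: HD => //; exact: id_opp. Qed.

Definition Pr (I J : R -> Prop) := Defs.proper_ideal J /\ forall r, I r -> J r.

Lemma exists_max (I : R -> Prop) : noetherian R -> Defs.proper_ideal I ->
  exists M, maximal_ideal M /\ forall r, I r -> M r.
Proof.
move=> Hn HI; apply: NNPP => Hno.
have step : forall J : {J | Pr I J}, exists K : {K | Pr I K},
    (forall r, sval J r -> sval K r) /\ exists r, sval K r /\ ~ sval J r.
  case=> J [HJ HIJ] /=.
  have : ~ maximal_ideal J by move=> HM; apply: Hno; exists J; split.
  move=> HnM.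
  have [K HK] : exists K, ~ (Defs.proper_ideal K -> (forall r, J r -> K r) -> same_ideal K J).
    apply: NNPP => HH; apply: HnM; split => // K HK HJK.
    by apply: NNPP => Hs; apply: HH; exists K => H; apply: Hs; apply: H.
  have HKp : Defs.proper_ideal K by apply: NNPP => H; apply: HK => /H.
  have HJK : forall r, J r -> K r.
    by apply: NNPP => H; apply: HK => _ /H.
  have [r Hr] : exists r, ~ (K r <-> J r).
    by apply: NNPP => H; apply: HK => _ _ r; apply: NNPP => H'; apply: H; exists r.
  have HKr : K r /\ ~ J r.
    split.
      apply: NNPP => H; apply: Hr; split => // HJr; exfalso; exact: H (HJK _ HJr).
    by move=> HJr; apply: Hr; split=> _; [done | exact: HJK].
  exists (exist _ K (conj HKp (fun r Ir => HJK r (HIJ r Ir)))); split => //.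
  by exists r.
pose nxt J := proj1_sig (constructive_indefinite_description _ (step J)).
have Hnxt : forall J, (forall r, sval J r -> sval (nxt J) r) /\
    exists r, sval (nxt J) r /\ ~ sval J r.
  by move=> J; rewrite /nxt; case: (constructive_indefinite_description _ _).
have HI0 : Pr I I by split.
pose ch k := iter k nxt (exist _ I HI0).
have mono : forall k d r, sval (ch k) r -> sval (ch (k + d)%N) r.
  move=> k; elim=> [|d IH] r Hr; first by rewrite addn0.
  by rewrite addnS /ch iterS; apply: (Hnxt _).1; apply: IH.
have mono' : forall k k' r, (k <= k')%N -> sval (ch k) r -> sval (ch k') r.
  by move=> k k' r /subnKC <-; apply: mono.
have idch : forall k, is_ideal (sval (ch k)) by move=> k; case: (svalP (ch k)) => [[]].
pose U r := exists k, sval (ch k) r.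
have HU : is_ideal U.
  split.
  - by exists 0%N; case: (idch 0%N).
  - move=> a b [k1 H1] [k2 H2]; exists (maxn k1 k2).
    case: (idch (maxn k1 k2)) => _ HD _; apply: HD.
      by apply: mono' H1; rewrite leq_maxl.
    by apply: mono' H2; rewrite leq_maxr.
  - by move=> r a [k Hk]; exists k; case: (idch k) => _ _ HM; apply: HM.
have [s Hs] := Hn U HU.
have [K HK] : exists K, forall z, z \in s -> sval (ch K) z.
  have : forall z, z \in s -> U z by move=> z /ig_mem /Hs.
  elim: s {Hs} => [|z s IH] Hz; first by exists 0%N.
  have [K1 HK1] := IH (fun z' Hz' => Hz z' (mem_behead (s:=z::s) Hz')).
  have [K2 HK2] := Hz z (mem_head _ _).
  exists (maxn K1 K2) => z'; rewrite in_cons => /orP [/eqP ->|Hz'].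
    by apply: mono' HK2; rewrite leq_maxr.
  by apply: mono' (HK1 _ Hz'); rewrite leq_maxl.
have [_ [r [Hr1 Hr2]]] := Hnxt (ch K).
apply: Hr2; apply: (ig_min (idch K) HK); apply/Hs; exists K.+1.
by rewrite /ch iterS.
Qed.

Lemma nonunit_in_m (m : R -> Prop) u : noetherian R -> local_ring_with m ->
  ~ m u -> exists v, v * u = 1.
Proof.
move=> Hn [Hm Hu] Hmu; apply: NNPP => Hv.
pose uR r := exists v, r = v * u.
have HuR : Defs.proper_ideal uR.
  split; last by case=> v /esym ?; apply: Hv; exists v.
  split.
  - by exists 0; rewrite mul0r.
  - by move=> a b [va ->] [vb ->]; exists (va + vb); rewrite mulrDl.
  - by move=> r a [va ->]; exists (r * va); rewrite mulrA.
have [M [HM HuM]] := exists_max Hn HuR.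
apply: Hmu; apply/(Hu M HM); apply: HuM; exists 1; by rewrite mul1r.
Qed.

End Aux.

Theorem lemma3p7 (R : comNzRingType) (m : R -> Prop) (n : nat)
  (x : 'I_n.+1 -> R) (y p q : R) :
  noetherian R -> local_ring_with m ->
  (forall i, m (x i)) -> m y ->
  min_num_gens (ideal_gen (rcons [seq x i | i <- enum 'I_n.+1] y)) n.+2 ->
  same_ideal (ideal_gen [seq (if i == ord0 then x i + p * y else x i) | i <- enum 'I_n.+1])
             (ideal_gen [seq (if i == ord0 then x i + q * y else x i) | i <- enum 'I_n.+1]) ->
  m (p - q).
Proof.
move=> Hn Hloc Hxm Hym [_ Hmin] Hsame.
have Hmid : is_ideal m by case: Hloc => [[[]]].
apply: NNPP => Hpq.
set x0 := x ord0.
set ks := [seq x (lift ord0 j) | j <- enum 'I_n].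
set K := ideal_gen ks.
have HK := ig_ideal ks.
have Hks : forall z, z \in ks -> exists j, z = x (lift ord0 j).
  by move=> z /mapP [j _ ->]; exists j.
have Hksin : forall j, x (lift ord0 j) \in ks.
  by move=> j; apply: map_f; rewrite mem_enum.
have Hxs : forall (I : R -> Prop), I x0 -> (forall j, I (x (lift ord0 j))) ->
    forall z, z \in [seq x i | i <- enum 'I_n.+1] -> I z.
  move=> I H0 Hj z /mapP [i _ ->]; case: (unliftP ord0 i) => [j ->|->] //.
have Hxsin : forall i, x i \in [seq x i | i <- enum 'I_n.+1].
  by move=> i; apply: map_f; rewrite mem_enum.
set Aq := [seq (if i == ord0 then x i + q * y else x i) | i <- enum 'I_n.+1].
have Hz : ideal_gen Aq (x0 + p * y).
  apply/Hsame; apply: ig_mem; apply/mapP; exists ord0; first by rewrite mem_enum.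
  by rewrite eqxx.
pose T r := exists a w, K w /\ r = a * (x0 + q * y) + w.
have HT : is_ideal T.
  case: HK => K0 KD KM.
  split.
  - by exists 0, 0; split => //; rewrite mul0r addr0.
  - move=> a b [a1 [w1 [H1 ->]]] [a2 [w2 [H2 ->]]].
    exists (a1 + a2), (w1 + w2); split; first by apply: KD.
    ring.
  - move=> r a [a1 [w1 [H1 ->]]].
    exists (r * a1), (r * w1); split; first by apply: KM.
    ring.
have [a [w [Hw E]]] : T (x0 + p * y).
  apply: (ig_min HT) Hz => z /mapP [i _ ->].
  case: (unliftP ord0 i) => [j ->|->].
    rewrite eq_sym (negbTE (neq_lift _ _)); exists 0, (x (lift ord0 j)); split.
      exact: ig_mem.
    by rewrite mul0r add0r.
  rewrite eqxx; exists 1, 0; split; first by case: HK.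
  by rewrite mul1r addr0.
have E2 : (p - a * q) * y = w - (1 - a) * x0.
  apply/eqP; rewrite -subr_eq0; apply/eqP.
  rewrite (_ : _ - _ = (x0 + p * y) - (a * (x0 + q * y) + w)); last by ring.
  by rewrite E subrr.
case: (classic (m (1 - a))) => Ha.
- have Hpaq : ~ m (p - a * q).
    move=> H; apply: Hpq.
    rewrite (_ : p - q = (p - a * q) - (1 - a) * q); last by ring.
    apply: id_sub => //; case: Hmid => _ _ HM.
    by rewrite mulrC; apply: HM.
  have [v Hv] := nonunit_in_m Hn Hloc Hpaq.
  set xs := [seq x i | i <- enum 'I_n.+1].
  have HI := ig_ideal xs.
  have Hy : ideal_gen xs y.
    rewrite (_ : y = v * ((p - a * q) * y)); last by rewrite mulrA Hv mul1r.
    rewrite E2; case: (HI) => _ _ HM; apply: (HM); apply: id_sub => //.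
      apply: (ig_min HI) Hw => z /Hks [j ->]; exact: ig_mem.
    by apply: HM; apply: ig_mem; exact: Hxsin.
  have : (n.+2 <= size xs)%N.
    apply: Hmin => r; split.
      apply: ig_min => // z; rewrite mem_rcons in_cons => /orP [/eqP ->|Hz'] //.
      exact: ig_mem.
    apply: ig_min; first exact: ig_ideal.
    by move=> z Hz'; apply: ig_mem; rewrite mem_rcons in_cons Hz' orbT.
  by rewrite size_map size_enum_ord ltnn.
- have [v Hv] := nonunit_in_m Hn Hloc Ha.
  set S := y :: ks.
  have HI := ig_ideal S.
  have HKS : forall r, K r -> ideal_gen S r.
    apply: ig_min => // z Hz'; apply: ig_mem; by rewrite in_cons Hz' orbT.
  have Hx0 : ideal_gen S x0.
    rewrite (_ : x0 = v * ((1 - a) * x0)); last by rewrite mulrA Hv mul1r.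
    rewrite (_ : (1 - a) * x0 = w - (p - a * q) * y); last by rewrite E2; ring.
    case: (HI) => _ _ HM; apply: (HM); apply: id_sub => //; first exact: HKS.
    by apply: HM; apply: ig_mem; rewrite mem_head.
  have : (n.+2 <= size S)%N.
    apply: Hmin => r; split.
      apply: ig_min => // z; rewrite mem_rcons in_cons => /orP [/eqP ->|Hz'].
        by apply: ig_mem; rewrite mem_head.
      apply: (Hxs _ Hx0) Hz' => j; apply: HKS; exact: ig_mem.
    apply: ig_min; first exact: ig_ideal.
    move=> z; rewrite in_cons => /orP [/eqP ->|/Hks [j ->]].
      by apply: ig_mem; rewrite mem_rcons mem_head.
    by apply: ig_mem; rewrite mem_rcons in_cons Hxsin orbT.
  by rewrite /= size_map size_enum_ord ltnn.
Qed.
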